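(* Let $A\in\mathbb Q^{n\times n}$, $X_0\in\mathbb Q^n$ with $X_0(1)=0$, $C=[1,\mathbf 0_{n-1}]$. Define $\lambda:=\max_i\sum_{j=1}^n|A_{ij}|+1$, $P_2:=\phi_1(A)-\lambda I_{2n}$, $Y_2:=\phi_2(X_0)$, the vector $\boldsymbol\beta\in\mathbb Q^{2n}$ by $\boldsymbol\beta(2i-1)=\boldsymbol\beta(2i)=\max(0,-(P_2Y_2)(2i-1),-(P_2Y_2)(2i))$ for $1\le i\le n$, and $\gamma:=\max_i\big((P_2Y_2)(i)+\boldsymbol\beta(i)\big)$; assume $\gamma>0$. Let $$P:=\begin{bmatrix}P_2&(P_2Y_2+\boldsymbol\beta)/\gamma\\ \mathbf 0_{2n}&0\end{bmatrix}\in\mathbb Q^{(2n+1)\times(2n+1)}.$$ Then for all $t$, $Ce^{At}X_0=\gamma e^{\lambda t}\,C'e^{Pt}Y_0$ with $C'=[1,-1,\mathbf 0_{2n-1}]$ and $Y_0=[\mathbf 0_{2n},1]^T$. Moreover $P$ has nonnegative off-diagonal entries and every row sum of $P$ is $\le0$.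
   Context: $\phi_1(A)\in\mathbb Q_{\ge0}^{2n\times2n}$ is obtained from $A$ by replacing each entry $A_{ij}$ by the $2\times2$ block $\begin{bmatrix}\alpha_{ij}&\beta_{ij}\\\beta_{ij}&\alpha_{ij}\end{bmatrix}$, where $\alpha_{ij}=\max(A_{ij},0)$, $\beta_{ij}=\max(-A_{ij},0)$. $\phi_2(X)\in\mathbb Q^{2n}$ replaces each entry $X(i)$ of $X\in\mathbb Q^n$ by the two entries $X(i),0$. $\mathbf 0_m$ is the zero row vector of length $m$; $I_{2n}$ is the identity. *)

(* Defs.v *)
From HB Require Import structures.
From mathcomp Require Import all_boot all_order all_algebra.
From mathcomp Require Import all_classical all_reals all_analysis.
Set Implicit Arguments. Unset Strict Implicit. Unset Printing Implicit Defensive.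
Import Order.TTheory GRing.Theory Num.Theory.
Import numFieldNormedType.Exports.
Local Open Scope ring_scope.

Definition mexp (R : realType) (k : nat) (M : 'M[R]_k) (t : R) : 'M[R]_k :=
  \matrix_(i, j) limn (fun N : nat =>
     ((\sum_(m < N) ((t ^+ m / (m`!)%:R) *: M ^+ m)) i j : R)).

(* phi_1 : each entry A_ij becomes [[alpha, beta],[beta, alpha]];
   index p (0-based) of the 2n-dim space belongs to block p/2, and
   position inside the block is given by the parity of p. *)
Definition phi1 (n : nat) (A : 'M[rat]_n.+1) : 'M[rat]_((n.+1).*2) :=
  \matrix_(p, q)
    (let a := A (inord (p./2)) (inord (q./2)) in
     if odd p == odd q then Num.max a 0 else Num.max (- a) 0).

Definition phi2 (n : nat) (X : 'cV[rat]_n.+1) : 'cV[rat]_((n.+1).*2) :=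
  \col_p (if odd p then 0 else X (inord (p./2)) 0).

Definition lam (n : nat) (A : 'M[rat]_n.+1) : rat :=
  \big[Num.max/ \sum_j `|A ord0 j| ]_(i < n.+1) (\sum_j `|A i j|) + 1.

Definition P2 (n : nat) (A : 'M[rat]_n.+1) : 'M[rat]_((n.+1).*2) :=
  phi1 A - (lam A)%:M.

Definition Y2 (n : nat) (X0 : 'cV[rat]_n.+1) := phi2 X0.

Definition betav (n : nat) (A : 'M[rat]_n.+1) (X0 : 'cV[rat]_n.+1)
  : 'cV[rat]_((n.+1).*2) :=
  let v := P2 A *m Y2 X0 in
  \col_p Num.max 0 (Num.max (- v (inord (p./2).*2) 0)
                            (- v (inord ((p./2).*2).+1) 0)).

Definition wv (n : nat) (A : 'M[rat]_n.+1) (X0 : 'cV[rat]_n.+1) :=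
  P2 A *m Y2 X0 + betav A X0.

Definition gam (n : nat) (A : 'M[rat]_n.+1) (X0 : 'cV[rat]_n.+1) : rat :=
  \big[Num.max/ wv A X0 (inord 0) 0]_(i < (n.+1).*2) wv A X0 i 0.

Definition Pmat (n : nat) (A : 'M[rat]_n.+1) (X0 : 'cV[rat]_n.+1)
  : 'M[rat]_((n.+1).*2 + 1) :=
  block_mx (P2 A) ((gam A X0)^-1 *: wv A X0) 0 0.

Definition Cvec (n : nat) : 'rV[rat]_n.+1 := \row_j ((j == ord0)%:R).

Definition Cpvec (n : nat) : 'rV[rat]_((n.+1).*2 + 1) :=
  \row_j (((j : nat) == 0%N)%:R - ((j : nat) == 1%N)%:R).

Definition Y0vec (n : nat) : 'cV[rat]_((n.+1).*2 + 1) := col_mx 0 1.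

(* Main.v *)
Require Import Defs.
From HB Require Import structures.
From mathcomp Require Import all_boot all_order all_algebra.
From mathcomp Require Import all_classical all_reals all_analysis.
From mathcomp Require Import zify ring lra.
Import Order.TTheory GRing.Theory Num.Theory.
Import numFieldNormedType.Exports.
Local Open Scope ring_scope.

Section Cauchy.
Variable R : realType.
Local Open Scope classical_set_scope.
Implicit Types a b : nat -> R.

Definition tri a b (K : nat) : R :=
  \sum_(0 <= k < K) \sum_(0 <= m < (K - k)%N) a k * b m.

Definition conv a b (N : nat) : R := \sum_(0 <= k < N.+1) a k * b (N - k)%N.

Lemma tri_eq a b K : series (conv a b) K = tri a b K.
Proof.
rewrite /series /tri /=; elim: K => [|K IH]; first by rewrite !big_geq.
rewrite big_nat_recr //= IH /conv big_nat_recr //= [in RHS]big_nat_recr //=.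
rewrite subnn subSnn big_nat1 addrA; congr (_ + _).
rewrite -big_split /=; apply: eq_big_nat => k /andP[_ kK].
by rewrite subSn ?(ltnW kK) // big_nat_recr.
Qed.

Lemma sq_tri a b K : series a K * series b K - tri a b K =
  \sum_(0 <= k < K) a k * \sum_((K - k)%N <= m < K) b m.
Proof.
rewrite /series /tri /= big_distrl /= -sumrB; apply: eq_bigr => k _.
rewrite mulrC big_distrr /= -big_distrr /=.
rewrite [X in X * a k](@big_cat_nat _ _ _ (K - k)) ?leq_subr //= mulrDl.
rewrite addrAC (mulrC _ (a k)) subrr add0r big_distrl /=.
by apply: eq_bigr => i _; exact: mulrC.
Qed.


Lemma tri_le a b K : (forall k, 0 <= a k) -> (forall k, 0 <= b k) ->
  tri a b K <= series a K * series b K.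
Proof.
move=> ha hb; rewrite -subr_ge0 sq_tri; apply: sumr_ge0 => k _.
by apply: mulr_ge0 => //; apply: sumr_ge0.
Qed.

Lemma tri_double a b K : (forall k, 0 <= a k) -> (forall k, 0 <= b k) ->
  series a K * series b K <= tri a b (2 * K)%N.
Proof.
move=> ha hb; rewrite /series /tri /= big_distrl /=.
rewrite (@big_cat_nat _ _ _ K 0 (2 * K)) ?leq_pmull //=.
rewrite -[X in X <= _]addr0 lerD //; last first.
  by apply: sumr_ge0 => k _; apply: sumr_ge0 => m _; apply: mulr_ge0.
apply: ler_sum_nat => k /andP[_ kK].
rewrite big_distrr /= (@big_cat_nat _ _ _ K 0 (2 * K - k)) //=.
  by rewrite lerDl; apply: sumr_ge0 => m _; apply: mulr_ge0.
lia.
Qed.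

Lemma cauchy_prod a b : cvgn (series (fun k => `|a k|)) ->
  cvgn (series (fun k => `|b k|)) ->
  series (conv a b) @ \oo --> limn (series a) * limn (series b).
Proof.
move=> caa cbb.
set aa := fun k => `|a k|; set bb := fun k => `|b k|.
have ha : forall k, 0 <= aa k by move=> k; exact: normr_ge0.
have hb : forall k, 0 <= bb k by move=> k; exact: normr_ge0.
have ca : cvgn (series a) by exact: (@normed_cvg _ R^o).
have cb : cvgn (series b) by exact: (@normed_cvg _ R^o).
have ndT : nondecreasing_seq (tri aa bb).
  move=> m p mp; rewrite -!tri_eq; apply: nondecreasing_series => //.
  by move=> k _ _; apply: sumr_ge0 => i _; apply: mulr_ge0.
have cT : cvgn (tri aa bb).
  apply: nondecreasing_is_cvgn => //.
  exists (limn (series aa) * limn (series bb)) => _ [K _ <-].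
  apply: (le_trans (tri_le _ _ K ha hb)); apply: ler_pM.
  - by apply: sumr_ge0.
  - by apply: sumr_ge0.
  - by apply: nondecreasing_cvgn_le => // m p mp; apply: nondecreasing_series.
  - by apply: nondecreasing_cvgn_le => // m p mp; apply: nondecreasing_series.
have T2 : (fun K => tri aa bb (2 * K)%N) @ \oo --> limn (tri aa bb).
  by have := cvg_comp _ _ (@cvg_mulnl 2 isT) cT.
have D2 : (fun K => tri aa bb (2 * K)%N - tri aa bb K) @ \oo --> 0.
  by rewrite -(subrr (limn (tri aa bb))); apply: cvgB.
have D : (fun K => series aa K * series bb K - tri aa bb K) @ \oo --> 0.
  apply: (@squeeze_cvgr _ _ _ _ (fun=> 0) _ _ _ _ (cvg_cst 0) D2).
  near=> K; rewrite subr_ge0 tri_le //= lerD2r tri_double //.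
have E : (fun K => series a K * series b K - series (conv a b) K) @ \oo --> 0.
  have ND : (fun K => - (series aa K * series bb K - tri aa bb K)) @ \oo --> 0.
    by rewrite -oppr0; apply: cvgN.
  apply: (squeeze_cvgr _ ND D); near=> K; rewrite -ler_norml tri_eq sq_tri sq_tri.
  apply: (le_trans (ler_norm_sum _ _ _)); apply: ler_sum => k _.
  rewrite normrM ler_wpM2l //; exact: ler_norm_sum.
have H := cvgB (cvgM ca cb) E.
rewrite subr0 in H.
suff -> : series (conv a b) =
  (fun K => series a K * series b K - (series a K * series b K - series (conv a b) K)).
  exact: H.
by apply/funext => K; rewrite subKr.
Unshelve. all: by end_near.
Qed.

End Cauchy.

Section Mx.
Variable R : realType.
Local Open Scope classical_set_scope.

Definition msum k (M : 'M[R]_k) : R := \sum_i \sum_j `|M i j|.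

Arguments msum {k}.

Lemma msum_ge0 k (M : 'M[R]_k) : 0 <= msum M.
Proof. by apply: sumr_ge0 => i _; apply: sumr_ge0. Qed.

Lemma mxpow_bound k (M : 'M[R]_k) m i j : `|(M ^+ m) i j| <= msum M ^+ m.
Proof.
elim: m i j => [|m IH] i j.
  rewrite expr0 mxE; case: (i == j) => /=; by rewrite ?normr1 ?normr0.
rewrite exprSr -mulmxE mxE exprSr.
apply: (le_trans (ler_norm_sum _ _ _)).
apply: (@le_trans _ _ (\sum_l msum M ^+ m * `|M l j|)).
  apply: ler_sum => l _; rewrite normrM ler_wpM2r //.
rewrite -big_distrr /= ler_wpM2l ?exprn_ge0 ?msum_ge0 //.
apply: ler_sum => l _; rewrite (bigD1 j) //= lerDl.
by apply: sumr_ge0.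
Qed.


Lemma abs_cvg_bound (x : nat -> R) (K s t : R) : 0 <= s ->
  (forall m, `|x m| <= K * s ^+ m) ->
  cvgn (series (fun m => `| t ^+ m / (m`!)%:R * x m |)).
Proof.
move=> s0 hx.
have K0 : 0 <= K by have := hx 0%N; rewrite expr0 mulr1; apply: le_trans.
have cv := @is_cvg_seriesZ _ _ K (is_cvg_series_exp_coeff (`|t| * s)).
apply: (series_le_cvg _ _ _ cv).
- by move=> m.
- by move=> m; rewrite /= mulr_ge0 // exp_coeff_ge0 // mulr_ge0.
move=> m; rewrite /= /exp_coeff /= normrM normrM normfV normrX.
rewrite [`|(m`!)%:R|]ger0_norm //.
rewrite [X in _ <= X](_ : _ = K * ((`|t| * s) ^+ m / (m`!)%:R)) // exprMn.
apply: (@le_trans _ _ (`|t| ^+ m / (m`!)%:R * (K * s ^+ m))).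
  by rewrite ler_wpM2l // mulr_ge0 ?exprn_ge0 ?invr_ge0 ?ler0n.
by rewrite le_eqVlt; apply/orP; left; apply/eqP; ring.
Qed.


Lemma cvg_sum_seq (J : Type) (r : seq J) (f : J -> nat -> R) (l : J -> R) :
  (forall j, f j @ \oo --> l j) ->
  (fun N => \sum_(j <- r) f j N) @ \oo --> \sum_(j <- r) l j.
Proof.
move=> h; elim: r => [|x r IH].
  have -> : (fun N => \sum_(j <- [::]) f j N) = fun=> 0.
    by apply/funext => N; rewrite big_nil.
  by rewrite big_nil; exact: cvg_cst.
have -> : (fun N => \sum_(j <- x :: r) f j N) =
   (fun N => f x N + \sum_(j <- r) f j N).
  by apply/funext => N; rewrite big_cons.
by rewrite big_cons; apply: cvgD.
Qed.

Lemma entry_series k (M : 'M[R]_k) t i j :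
  (fun N => (\sum_(m < N) ((t ^+ m / (m`!)%:R) *: M ^+ m)) i j) =
  series (fun m => t ^+ m / (m`!)%:R * (M ^+ m) i j).
Proof.
apply/funext => N; rewrite summxE /series /= big_mkord.
by apply: eq_bigr => m _; rewrite mxE.
Qed.

Lemma entry_cvg k (M : 'M[R]_k) t i j :
  cvgn (series (fun m => t ^+ m / (m`!)%:R * (M ^+ m) i j)).
Proof.
apply: (@normed_cvg _ R^o).
apply: (@abs_cvg_bound _ 1 (msum M)); first exact: msum_ge0.
by move=> m; rewrite mul1r mxpow_bound.
Qed.

Lemma mexp_bil k (M : 'M[R]_k) (u : 'rV_k) (v : 'cV_k) t :
  (u *m mexp M t *m v) 0 0 =
  limn (series (fun m => t ^+ m / (m`!)%:R * (u *m M ^+ m *m v) 0 0)).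
Proof.
set c := fun m : nat => t ^+ m / (m`!)%:R.
set e := fun i j => series (fun m => c m * (M ^+ m) i j).
have Hs : series (fun m => c m * (u *m M ^+ m *m v) 0 0) =
   (fun N => \sum_j \sum_i u 0 i * e i j N * v j 0).
  apply/funext => N; rewrite /e /series /=.
  under eq_bigr do rewrite mxE big_distrr /=.
  rewrite exchange_big /=; apply: eq_bigr => j _.
  under eq_bigr do rewrite mxE big_distrl /= big_distrr /=.
  rewrite exchange_big /=; apply: eq_bigr => i _.
  rewrite big_distrr /= big_distrl /=; apply: eq_bigr => m _; ring.
rewrite Hs; apply/esym/cvg_lim => //.
rewrite mxE; apply: cvg_sum_seq => j; rewrite mxE.
rewrite big_distrl /=; apply: cvg_sum_seq => i.
apply: cvgMr_tmp; apply: cvgMl_tmp.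
rewrite /mexp mxE entry_series.
exact: entry_cvg.
Qed.


Lemma bil_bound k (M : 'M[R]_k) (u : 'rV_k) (v : 'cV_k) m :
  `|(u *m M ^+ m *m v) 0 0| <=
    (\sum_j \sum_i `|u 0 i| * `|v j 0|) * msum M ^+ m.
Proof.
rewrite mxE big_distrl /=; apply: (le_trans (ler_norm_sum _ _ _)).
apply: ler_sum => j _; rewrite mxE big_distrl /= big_distrl /=.
apply: (le_trans (ler_norm_sum _ _ _)); apply: ler_sum => i _.
rewrite !normrM mulrAC ler_wpM2l ?mulr_ge0 //.
exact: mxpow_bound.
Qed.

Lemma bil_abs_cvg k (M : 'M[R]_k) (u : 'rV_k) (v : 'cV_k) t :
  cvgn (series (fun m => `| t ^+ m / (m`!)%:R * (u *m M ^+ m *m v) 0 0 |)).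
Proof.
apply: (@abs_cvg_bound _ _ (msum M)); first exact: msum_ge0.
by move=> m; apply: bil_bound.
Qed.

Lemma bil_cvg k (M : 'M[R]_k) (u : 'rV_k) (v : 'cV_k) t :
  cvgn (series (fun m => t ^+ m / (m`!)%:R * (u *m M ^+ m *m v) 0 0)).
Proof. by apply: (@normed_cvg _ R^o); exact: bil_abs_cvg. Qed.

End Mx.

Section Alg.
Variable n : nat.
Local Notation N := n.+1.
Local Notation N2 := (n.+1).*2.

Lemma sum_pairs_nat (V : nmodType) (g : nat -> V) K :
  \sum_(0 <= p < K.*2) g p = \sum_(0 <= i < K) (g i.*2 + g i.*2.+1).
Proof.
elim: K => [|K IH]; first by rewrite !big_geq.
by rewrite doubleS !big_nat_recr //= IH addrA.
Qed.

Lemma sum_ord_nat (V : nmodType) m (f : 'I_m.+1 -> V) :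
  \sum_(p < m.+1) f p = \sum_(0 <= p < m.+1) f (inord p).
Proof.
rewrite big_mkord; apply: eq_bigr => p _; by rewrite inord_val.
Qed.

Lemma sum_pairs (V : nmodType) (f : 'I_N2 -> V) :
  \sum_p f p = \sum_(i < N) (f (inord i.*2) + f (inord i.*2.+1)).
Proof.
rewrite (@sum_ord_nat V n.*2.+1 f).
rewrite -[(n.*2.+1).+1]/((n.+1).*2) sum_pairs_nat sum_ord_nat.
by apply: eq_big_nat => i /andP[_ iN]; rewrite inordK.
Qed.


Lemma maxdiff (a : rat) : Num.max a 0 - Num.max (- a) 0 = a.
Proof. by case: (lerP 0 a) => h; case: (lerP 0 (- a)) => h'; lra. Qed.

Lemma maxsum (a : rat) : Num.max a 0 + Num.max (- a) 0 = `|a|.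
Proof.
case: (lerP 0 a) => h; case: (lerP 0 (- a)) => h'.
- by rewrite ger0_norm //; lra.
- by rewrite ger0_norm //; lra.
- by rewrite ltr0_norm //; lra.
- lra.
Qed.

Definition Dm : 'M[rat]_(N, N2) :=
  \matrix_(i, p) (if (p : nat)./2 == (i : nat) then (if odd p then -1 else 1) else 0).

Lemma val_ev (i : 'I_N) : ((inord i.*2 : 'I_N2) : nat) = i.*2.
Proof. by rewrite inordK // -doubleS ltn_double. Qed.

Lemma val_od (i : 'I_N) : ((inord i.*2.+1 : 'I_N2) : nat) = i.*2.+1.
Proof. by rewrite inordK // -[X in (_ < X)%N]/((n.+1).*2) ltn_Sdouble. Qed.

Lemma half_od k : (k.*2.+1)./2 = k.
Proof. by rewrite -[k.*2.+1]/((true + k.*2)%N) half_bit_double. Qed.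

Lemma D_ev (i j : 'I_N) : Dm i (inord j.*2) = (j == i)%:R.
Proof. rewrite mxE val_ev doubleK odd_double /=.
by case: ifP => h; rewrite -[j == i]/(val j == val i) h.
Qed.

Lemma D_od (i j : 'I_N) : Dm i (inord j.*2.+1) = - (j == i)%:R.
Proof.
rewrite mxE val_od half_od /= odd_double /=.
by case: ifP => h; rewrite -[j == i]/(val j == val i) h ?oppr0.
Qed.


Lemma half_lt (q : 'I_N2) : ((q : nat)./2 < N)%N.
Proof. by rewrite ltn_half_double. Qed.

Lemma phi1_ev (A : 'M[rat]_N) (j : 'I_N) q : phi1 A (inord j.*2) q =
  if odd q then Num.max (- A j (inord (q : nat)./2)) 0
  else Num.max (A j (inord (q : nat)./2)) 0.
Proof. by rewrite mxE val_ev doubleK odd_double inord_val; case: (odd q). Qed.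

Lemma phi1_od (A : 'M[rat]_N) (j : 'I_N) q : phi1 A (inord j.*2.+1) q =
  if odd q then Num.max (A j (inord (q : nat)./2)) 0
  else Num.max (- A j (inord (q : nat)./2)) 0.
Proof.
by rewrite mxE val_od half_od /= odd_double inord_val; case: (odd q).
Qed.

Lemma Dsum (f : 'I_N2 -> rat) (i : 'I_N) :
  \sum_p Dm i p * f p = f (inord i.*2) - f (inord i.*2.+1).
Proof.
rewrite sum_pairs.
under eq_bigr do rewrite D_ev D_od.
rewrite (bigD1 i) //= big1 ?addr0; last first.
  by move=> j /negbTE ->; rewrite mul0r oppr0 mul0r addr0.
by rewrite eqxx mul1r mulN1r.
Qed.

Lemma sumD (A : 'M[rat]_N) (i : 'I_N) (q : 'I_N2) :
  \sum_j A i j * Dm j q = A i (inord (q : nat)./2) * (if odd q then -1 else 1).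
Proof.
rewrite (bigD1 (inord (q : nat)./2)) //= big1 ?addr0.
  by rewrite mxE inordK ?half_lt // eqxx.
move=> j hj; rewrite mxE; case: eqP => [E|]; last by rewrite mulr0.
by move: hj; rewrite E inord_val eqxx.
Qed.

Lemma DA (A : 'M[rat]_N) : Dm *m phi1 A = A *m Dm.
Proof.
apply/matrixP => i q; rewrite !mxE Dsum sumD phi1_ev phi1_od.
set a := A i _.
have := maxdiff a; case: (odd q) => h; lra.
Qed.


Lemma DY (X0 : 'cV[rat]_N) : Dm *m Y2 X0 = X0.
Proof.
apply/matrixP => i z; rewrite mxE Dsum !mxE val_ev val_od doubleK odd_double.
by rewrite /= odd_double /= subr0 inord_val [z]ord1.
Qed.

Lemma Dbeta (A : 'M[rat]_N) (X0 : 'cV[rat]_N) : Dm *m betav A X0 = 0.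
Proof.
apply/matrixP => i z; rewrite mxE Dsum !mxE val_ev val_od doubleK half_od.
by rewrite subrr.
Qed.

Lemma DP2 (A : 'M[rat]_N) : Dm *m P2 A = (A - (lam A)%:M) *m Dm.
Proof.
by rewrite /P2 mulmxBr DA mulmxBl mul_mx_scalar mul_scalar_mx.
Qed.

Lemma Dpow (A : 'M[rat]_N) m : Dm *m P2 A ^+ m = (A - (lam A)%:M) ^+ m *m Dm.
Proof.
elim: m => [|m IH]; first by rewrite !expr0 mulmx1 mul1mx.
have E (M : 'M[rat]_N) : M ^+ m.+1 = M ^+ m *m M by rewrite exprSr.
have E2 (M : 'M[rat]_N2) : M ^+ m.+1 = M ^+ m *m M by rewrite exprSr.
by rewrite E2 mulmxA IH -mulmxA DP2 mulmxA E.
Qed.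

Lemma Dw (A : 'M[rat]_N) (X0 : 'cV[rat]_N) :
  Dm *m wv A X0 = (A - (lam A)%:M) *m X0.
Proof.
by rewrite /wv mulmxDr mulmxA DP2 -mulmxA DY Dbeta addr0.
Qed.


Lemma Ppow (A : 'M[rat]_N) (X0 : 'cV[rat]_N) m :
  Pmat A X0 ^+ m.+1 *m Y0vec n =
  col_mx (P2 A ^+ m *m ((gam A X0)^-1 *: wv A X0)) 0.
Proof.
elim: m => [|m IH].
  rewrite expr1 expr0 mul1mx /Pmat /Y0vec mul_block_col.
  by rewrite !mulmx0 mulmx1 mul0mx !add0r.
have E (M : 'M[rat]_(N2 + 1)) : M ^+ m.+2 = M *m M ^+ m.+1 by rewrite exprS.
have E2 (M : 'M[rat]_N2) : M ^+ m.+1 = M *m M ^+ m by rewrite exprS.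
rewrite E -mulmxA IH /Pmat mul_block_col !mulmx0 !addr0 mul0mx.
by rewrite mulmxA -E2.
Qed.

Lemma Cvec_mul (x : 'cV[rat]_N) : (Cvec n *m x) 0 0 = x ord0 0.
Proof.
rewrite mxE (bigD1 ord0) //= big1 ?addr0; first by rewrite mxE eqxx mul1r.
by move=> j hj; rewrite mxE (negbTE hj) mul0r.
Qed.

Lemma Cp_col (x : 'cV[rat]_N2) (y : 'cV[rat]_1) :
  (Cpvec n *m col_mx x y) 0 0 = (Cvec n *m (Dm *m x)) 0 0.
Proof.
rewrite Cvec_mul !mxE big_split_ord /= [X in _ + X]big1 ?addr0; last first.
  move=> j _; rewrite !mxE /=.
  by rewrite subrr mul0r.
apply: eq_bigr => p _; rewrite col_mxEu !mxE; congr (_ * _).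
case: p => [[|[|p]] hp] //=.
Qed.


Lemma F1 (A : 'M[rat]_N) (X0 : 'cV[rat]_N) m :
  X0 ord0 0 = 0 -> gam A X0 != 0 ->
  gam A X0 * (Cpvec n *m Pmat A X0 ^+ m *m Y0vec n) 0 0 =
  (Cvec n *m (A - (lam A)%:M) ^+ m *m X0) 0 0.
Proof.
move=> hX hg; case: m => [|m].
  rewrite !expr0 mulmx1 mulmx1 Cvec_mul hX /Y0vec Cp_col mulmx0.
  by rewrite mulmx0 mxE mulr0.
rewrite -mulmxA Ppow Cp_col [Dm *m _]mulmxA Dpow -mulmxA -scalemxAr Dw.
rewrite -!scalemxAr mxE mulrA mulfV // mul1r.
have E2 (M : 'M[rat]_N) : M ^+ m.+1 = M ^+ m *m M by rewrite exprSr.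
by rewrite E2 !mulmxA.
Qed.


Lemma le_bigmax_seq (I : eqType) (r : seq I) (F : I -> rat) x i :
  i \in r -> F i <= \big[Num.max/x]_(j <- r) F j.
Proof.
elim: r => // a r IH; rewrite inE big_cons => /orP[/eqP->|/IH h].
  by rewrite le_max lexx.
by rewrite le_max h orbT.
Qed.

Lemma le_bigmax_ord m (F : 'I_m -> rat) x i :
  F i <= \big[Num.max/x]_(j < m) F j.
Proof. exact: le_bigmax_seq (mem_index_enum i). Qed.

Lemma w_ge0 (A : 'M[rat]_N) (X0 : 'cV[rat]_N) p : 0 <= wv A X0 p 0.
Proof.
rewrite /wv mxE [betav _ _ _ _]mxE.
move: (P2 A *m Y2 X0) => v.
have hp := odd_double_half p.
have : - v p 0 <= Num.max 0 (Num.max (- v (inord ((p : nat)./2).*2) 0)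
       (- v (inord ((p : nat)./2).*2.+1) 0)).
  rewrite le_max; apply/orP; right; rewrite le_max; apply/orP.
  case: (odd p) hp => /= hp; [right|left].
    have E : (inord ((p : nat)./2).*2.+1 : 'I_N2) = p.
      have hp' : ((p : nat)./2).*2.+1 = p by exact: hp.
      by apply: val_inj => /=; rewrite inordK hp' // ltn_ord.
    by rewrite E.
  have E : (inord ((p : nat)./2).*2 : 'I_N2) = p.
    have hp' : ((p : nat)./2).*2 = p by exact: hp.
    by apply: val_inj => /=; rewrite inordK hp' // ltn_ord.
  by rewrite E.
by move=> h; rewrite addrC -[v p 0]opprK subr_ge0.
Qed.


Lemma phi1_ge0 (A : 'M[rat]_N) p q : 0 <= phi1 A p q.
Proof. by rewrite mxE /=; case: (_ == _); rewrite le_max lexx orbT. Qed.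

Lemma PNN (A : 'M[rat]_N) (X0 : 'cV[rat]_N) (hg : 0 < gam A X0) i j :
  i != j -> 0 <= Pmat A X0 i j.
Proof.
move=> hij; rewrite /Pmat.
case: (split_ordP i) hij => i' ->; case: (split_ordP j) => j' -> hij.
- rewrite block_mxEul /P2 [X in 0 <= X]mxE [X in _ + X]mxE.
  have -> : ((lam A)%:M : 'M[rat]_N2) i' j' = 0.
    rewrite mxE; have -> // : (i' == j') = false.
    by apply/negP => /eqP E; rewrite E eqxx in hij.
  by rewrite oppr0 addr0 phi1_ge0.
- rewrite block_mxEur mxE [j']ord1; apply: mulr_ge0; last exact: w_ge0.
  by rewrite invr_ge0 ltW.
- by rewrite block_mxEdl mxE.
- by rewrite block_mxEdr mxE.
Qed.

Lemma phi1_row (A : 'M[rat]_N) (p : 'I_N2) :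
  \sum_q phi1 A p q = \sum_l `|A (inord ((p : nat)./2)) l|.
Proof.
rewrite sum_pairs; apply: eq_bigr => l _.
rewrite !mxE val_ev val_od doubleK half_od /= odd_double /= inord_val.
case: (odd p) => /=; last exact: maxsum.
by rewrite addrC maxsum.
Qed.

Lemma sum_scalar_row (a : rat) (i : 'I_N2) : \sum_j (a%:M : 'M[rat]_N2) i j = a.
Proof.
rewrite (bigD1 i) //= big1 ?addr0; first by rewrite mxE eqxx mulr1n.
by move=> j hj; rewrite mxE eq_sym (negbTE hj) mulr0n.
Qed.

Lemma PRS (A : 'M[rat]_N) (X0 : 'cV[rat]_N) (hg : 0 < gam A X0) i :
  \sum_j Pmat A X0 i j <= 0.
Proof.
rewrite /Pmat; case: (split_ordP i) => i' ->; rewrite big_split_ord /=.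
  under eq_bigr do rewrite block_mxEul.
  under [X in _ + X]eq_bigr do rewrite block_mxEur.
  rewrite big_ord1 mxE /P2.
  have -> : \sum_j (phi1 A - (lam A)%:M) i' j =
    \sum_j phi1 A i' j - \sum_j ((lam A)%:M : 'M[rat]_N2) i' j.
    by rewrite -sumrB; apply: eq_bigr => j _; rewrite !mxE.
  rewrite sum_scalar_row phi1_row.
  have h1 : \sum_l `|A (inord ((i' : nat)./2)) l| <= lam A - 1.
    by rewrite /lam addrK; apply: le_bigmax_seq; exact: mem_index_enum.
  have h2 : (gam A X0)^-1 * wv A X0 i' 0 <= 1.
    rewrite mulrC ler_pdivrMr // mul1r /gam.
    by apply: le_bigmax_seq; exact: mem_index_enum.
  move: h1 h2; move: (\sum_l _) (_^-1 * _) (lam A) => x y z h1 h2.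
  lra.
under eq_bigr do rewrite block_mxEdl mxE.
under [X in _ + X]eq_bigr do rewrite block_mxEdr mxE.
by rewrite !big1 ?addr0.
Qed.

End Alg.

Section Fin.
Variable R : realType.

Lemma map_mxX k (M : 'M[rat]_k) m :
  (map_mx (@ratr R) M) ^+ m = map_mx ratr (M ^+ m).
Proof.
elim: m => [|m IH]; first by rewrite !expr0 map_mx1.
have E (X : 'M[R]_k) : X ^+ m.+1 = X ^+ m *m X by rewrite exprSr.
have E2 (X : 'M[rat]_k) : X ^+ m.+1 = X ^+ m *m X by rewrite exprSr.
by rewrite E E2 IH map_mxM.
Qed.

Lemma map_bil k (M : 'M[rat]_k) (u : 'rV[rat]_k) (v : 'cV[rat]_k) m :
  (map_mx (@ratr R) u *m (map_mx ratr M) ^+ m *m map_mx ratr v) 0 0 =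
  ratr ((u *m M ^+ m *m v) 0 0).
Proof. by rewrite map_mxX -!map_mxM mxE. Qed.

Lemma scalar_mxX k (c : R) i : (c%:M : 'M[R]_k) ^+ i = (c ^+ i)%:M.
Proof.
elim: i => [|i IH]; first by rewrite !expr0.
have E (X : 'M[R]_k) : X ^+ i.+1 = X ^+ i *m X by rewrite exprSr.
by rewrite E IH -scalar_mxM exprSr.
Qed.

Lemma comb k (c t : R) (B : 'M[R]_k) (u : 'rV[R]_k) (v : 'cV[R]_k) N :
  t ^+ N / (N`!)%:R * (u *m (B + c%:M) ^+ N *m v) 0 0 =
  @conv R (exp_coeff (c * t))
       (fun m => t ^+ m / (m`!)%:R * (u *m B ^+ m *m v) 0 0) N.
Proof.
rewrite exprDn_comm; last exact: scalar_mxC.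
rewrite /conv big_mkord mulmx_sumr mulmx_suml summxE big_distrr /=.
apply: eq_bigr => i _.
have E (X Y : 'M[R]_k) : X * Y = X *m Y by [].
rewrite scalar_mxX E mul_mx_scalar -[_ *+ 'C(N, i)]scaler_nat.
rewrite -!scalemxAr -!scalemxAl !mxE.
have iN : (i <= N)%N by rewrite -ltnS ltn_ord.
have hb := bin_fact iN.
rewrite /exp_coeff /= -hb natrM natrM.
have -> : t ^+ N = t ^+ i * t ^+ (N - i) by rewrite -exprD subnKC.
set y := (u *m B ^+ (N - i) *m v) 0 0.
have h1 : (i`!)%:R != 0 :> R by rewrite pnatr_eq0 -lt0n fact_gt0.
have h2 : ((N - i)`!)%:R != 0 :> R by rewrite pnatr_eq0 -lt0n fact_gt0.
have h3 : ('C(N, i))%:R != 0 :> R by rewrite pnatr_eq0 -lt0n bin_gt0.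
rewrite exprMn; field.
by rewrite h1 h2 h3.
Qed.

End Fin.

Theorem mainTheorem5 (R : realType) (n : nat)
  (A : 'M[rat]_n.+1) (X0 : 'cV[rat]_n.+1)
  (hX0 : X0 ord0 0 = 0) (hgam : 0 < gam A X0) :
  (forall t : R,
     (map_mx ratr (Cvec n) *m mexp (map_mx ratr A) t *m map_mx ratr X0) 0 0
     = ratr (gam A X0) * expR (ratr (lam A) * t)
       * (map_mx ratr (Cpvec n) *m mexp (map_mx ratr (Pmat A X0)) t
            *m map_mx ratr (Y0vec n)) 0 0)
  /\ (forall i j, i != j -> 0 <= Pmat A X0 i j)
  /\ (forall i, \sum_j Pmat A X0 i j <= 0).
Proof.
split; last first.
  by split; [move=> i j; exact: PNN | move=> i; exact: PRS].
move=> t; rewrite !mexp_bil.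
set c : R := ratr (lam A).
set B := map_mx (@ratr R) (A - (lam A)%:M).
set u := map_mx (@ratr R) (Cvec n).
set v := map_mx (@ratr R) X0.
have HM : map_mx (@ratr R) A = B + c%:M.
  by rewrite /B map_mxB map_scalar_mx subrK.
set b := fun m : nat => t ^+ m / (m`!)%:R * (u *m B ^+ m *m v) 0 0.
have Hf : (fun m : nat => t ^+ m / (m`!)%:R * (u *m map_mx ratr A ^+ m *m v) 0 0)
   = @conv R (exp_coeff (c * t)) b.
  by apply/funext => m; rewrite HM comb.
have ca : cvgn (series (fun k => `|exp_coeff (c * t) k|)).
  by have := is_cvg_series_exp_coeff `|c * t|; rewrite -normed_series_exp_coeff.
have cb : cvgn (series (fun k => `|b k|)) by exact: bil_abs_cvg.
rewrite Hf (cvg_lim _ (@cauchy_prod R _ _ ca cb)) //.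
set q := fun m : nat => t ^+ m / (m`!)%:R *
  (map_mx ratr (Cpvec n) *m map_mx (@ratr R) (Pmat A X0) ^+ m
     *m map_mx ratr (Y0vec n)) 0 0.
have Hb : b = ratr (gam A X0) *: q.
  apply/funext => m; rewrite /b /q /u /v /B !map_bil -F1 //; last first.
    by rewrite gt_eqF.
  rewrite rmorphM /=.
  rewrite [RHS](_ : _ = ratr (gam A X0) * q m) // /q map_bil; ring.
rewrite Hb lim_seriesZ; last exact: bil_cvg.
rewrite /expR [_ *: limn _](_ : _ = ratr (gam A X0) * limn (series q)) //.
ring.
Qed.
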